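(* Let $\epsilon>0$, let $\mathbf{w}\in\mathbb{R}^d$ be non-increasing, and let $1\le k\le d-1$ with $\mathbf{w}^k_{max}>\mathbf{w}^k_{min}$. For every scored vote $v\in\mathbb{D}_v$, the private view $\tilde v$ output by the additive mechanism satisfies $\mathbb{E}[\tilde v]=v$.
   Context: Candidates are $C_1,\dots,C_d$; a vote is a linear ordering; the scored vote $v$ assigns score $w_j$ to the candidate at rank $j$; $\mathbb{D}_v$ is the set of permutations of $\mathbf{w}$. Let $\mathcal{C}^k$ be the set of $k$-element subsets of candidates, $\mathbf{w}^k_{max}=\sum_{j=1}^kw_j$, $\mathbf{w}^k_{min}=\sum_{j=d-k+1}^dw_j$, $W=\sum_{j=1}^dw_j$. The additive mechanism on input $v$ outputs $S\in\mathcal{C}^k$ with probability $$\Pr[S\mid v]=\frac{\sum_{C_{j'}\in S}v_{j'}-\mathbf{w}^k_{min}}{\mathbf{w}^k_{max}-\mathbf{w}^k_{min}}\cdot\frac{e^\epsilon-1}{\Phi}+\frac1\Phi,\qquad \Phi=\binom dk\frac{\frac kd(e^\epsilon-1)W-e^\epsilon\mathbf{w}^k_{min}+\mathbf{w}^k_{max}}{\mathbf{w}^k_{max}-\mathbf{w}^k_{min}},$$ and the private view $\tilde v_j=a_k[C_j\in S]-b_k$, where $a_k=\big[W(e^\epsilon-1)-\tfrac dke^\epsilon\mathbf{w}^k_{min}+\tfrac dk\mathbf{w}^k_{max}\big]\frac{d-1}{(d-k)(e^\epsilon-1)}$ and $b_k=\big[\tfrac{(k-1)(e^\epsilon-1)}{d-1}W-e^\epsilon\mathbf{w}^k_{min}+\mathbf{w}^k_{max}\big]\frac{d-1}{(d-k)(e^\epsilon-1)}$.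 *)

(* Defs.v *)
From HB Require Import structures.
From mathcomp Require Import all_boot all_order all_algebra.
From mathcomp Require Import fingroup perm.
From mathcomp Require Import reals sequences exp.
Set Implicit Arguments. Unset Strict Implicit. Unset Printing Implicit Defensive.
Import Order.TTheory GRing.Theory Num.Theory.
Local Open Scope ring_scope.

Section Additive.
Variables (R : realType) (d k : nat) (eps : R) (w : 'I_d -> R).

(* Candidates C_1..C_d are indexed by 'I_d (0-based); rank j (1-based) is
   index j-1. *)
Definition wmax : R := \sum_(j < d | (j < k)%N) w j.
Definition wmin : R := \sum_(j < d | (d - k <= j)%N) w j.
Definition Wsum : R := \sum_(j < d) w j.

(* Scored votes: D_v = permutations of w; v j = score of candidate C_j *)
Definition is_scored_vote (v : 'I_d -> R) : Prop :=
  exists s : 'S_d, forall j, v j = w (s j).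

Definition Phi : R :=
  'C(d, k)%:R * ((k%:R / d%:R) * (expR eps - 1) * Wsum
                 - expR eps * wmin + wmax) / (wmax - wmin).

(* Pr[S | v] for a k-subset S *)
Definition add_prob (v : 'I_d -> R) (S : {set 'I_d}) : R :=
  (\sum_(j in S) v j - wmin) / (wmax - wmin) * ((expR eps - 1) / Phi)
  + 1 / Phi.

Definition a_coef : R :=
  (Wsum * (expR eps - 1) - (d%:R / k%:R) * expR eps * wmin
   + (d%:R / k%:R) * wmax)
  * ((d%:R - 1) / ((d - k)%:R * (expR eps - 1))).

Definition b_coef : R :=
  ((k%:R - 1) * (expR eps - 1) / (d%:R - 1) * Wsum
   - expR eps * wmin + wmax)
  * ((d%:R - 1) / ((d - k)%:R * (expR eps - 1))).

Definition priv_view (S : {set 'I_d}) (j : 'I_d) : R :=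
  a_coef * (j \in S)%:R - b_coef.

Definition expected_priv_view (v : 'I_d -> R) (j : 'I_d) : R :=
  \sum_(S : {set 'I_d} | #|S| == k) add_prob v S * priv_view S j.

End Additive.

(* Main.v *)
Require Import Defs.
From HB Require Import structures.
From mathcomp Require Import all_boot all_order all_algebra.
From mathcomp Require Import fingroup perm.
From mathcomp Require Import reals sequences exp.
From mathcomp Require Import zify ring lra.
Import Order.TTheory GRing.Theory Num.Theory.
Local Open Scope ring_scope.

Lemma sum_ind (R : realType) (T : finType) (P Q : pred T) :
  \sum_(x | P x) ((Q x)%:R : R) = #|[pred x | P x && Q x]|%:R.
Proof.
rewrite -sum1_card natr_sum big_mkcondr /=; apply: eq_bigr => x _.
by case: (Q x).
Qed.

Lemma cnt1 (R : realType) (d k : nat) (j : 'I_d) : (k <= d)%N ->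
  \sum_(S : {set 'I_d} | #|S| == k) (((j \in S))%:R : R) = 'C(d.-1, d - k)%:R.
Proof.
move=> hk; rewrite sum_ind; congr (_%:R).
rewrite -sum1_card (reindex_inj (@setC_inj _)) /= sum1_card.
rewrite (_ : 'C(d.-1, d-k) = 'C(#|[set~ j]|, d-k)); last by rewrite cardsC1 card_ord.
rewrite -cards_draws; apply: eq_card => S.
rewrite !inE subsetC sub1set !inE andbC; congr (_ && _).
rewrite (cardsCs S) card_ord.
have hc : (#|~:S| <= d)%N := leq_trans (max_card _) (eq_leq (card_ord d)).
move: (#|~:S|) hc => c hc.
apply/eqP/eqP => H; lia.
by rewrite inE.
Qed.

Lemma cnt2 (R : realType) (d k : nat) (i j : 'I_d) : (k <= d)%N -> i != j ->
  \sum_(S : {set 'I_d} | #|S| == k) (((i \in S))%:R * ((j \in S))%:R : R) = 'C(d.-2, d - k)%:R.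
Proof.
move=> hk hij.
under eq_bigr => S _ do rewrite -natrM mulnb.
rewrite sum_ind; congr (_%:R).
rewrite -sum1_card (reindex_inj (@setC_inj _)) /= sum1_card.
have hc2 : #|~: [set i; j]| = d.-2.
  have := cardsC [set i; j]; rewrite cards2 hij card_ord /=; lia.
rewrite -hc2 -cards_draws; apply: eq_card => S.
rewrite !inE subsetC subUset !sub1set !inE andbC; congr (_ && _).
rewrite (cardsCs S) card_ord.
have hc : (#|~:S| <= d)%N := leq_trans (max_card _) (eq_leq (card_ord d)).
move: (#|~:S|) hc => c hc.
apply/eqP/eqP => H; lia.
by rewrite !inE.
Qed.

Lemma sum_cst (R : realType) (T : finType) (P : pred T) (c : R) :
  \sum_(x | P x) c = #|[pred x | P x]|%:R * c.
Proof.
rewrite -sum1_card natr_sum mulr_suml; apply: eq_bigr => x _.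
by rewrite mulr1n mul1r.
Qed.

Lemma card_lt (d m : nat) : (m <= d)%N -> #|[pred i : 'I_d | (i < m)%N]| = m.
Proof.
move=> h; rewrite -sum1_card (big_ord_narrow h) sum1_card card_ord //.
Qed.

Lemma avg (R : realType) d k (w : 'I_d -> R)
  (hw : forall i j : 'I_d, (i <= j)%N -> w j <= w i) (hk : (k <= d)%N) :
  d%:R * wmin k w <= k%:R * Wsum w.
Proof.
rewrite /wmin /Wsum.
set m := (d - k)%N.
have hm : (m <= d)%N by rewrite /m leq_subr.
have cL := @card_lt d m hm.
have cR : #|[pred i : 'I_d | (m <= i)%N]| = k.
  have e : #|[pred i : 'I_d | (m <= i)%N]| = #|[predC [pred i : 'I_d | (i < m)%N]]|.
    by apply: eq_card => i; rewrite !inE -leqNgt.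
  have := cardC [pred i : 'I_d | (i < m)%N]; rewrite cL card_ord e => H; apply/eqP; by rewrite -(eqn_add2l m) H /m subnK.
set T := \sum_(i < d | (i < m)%N) w i.
set B := \sum_(i < d | (m <= i)%N) w i.
have hW : \sum_(i < d) w i = T + B.
  rewrite (bigID (fun i : 'I_d => (i < m)%N)) /=; congr (_ + _).
  by apply: eq_bigl => i; rewrite -leqNgt.
have key : m%:R * B <= k%:R * T.
  have -> : m%:R * B = \sum_(i < d | (i < m)%N) \sum_(j < d | (m <= j)%N) w j.
    by rewrite sum_cst cL.
  have -> : k%:R * T = \sum_(j < d | (m <= j)%N) \sum_(i < d | (i < m)%N) w i.
    by rewrite sum_cst cR.
  rewrite [X in _ <= X](exchange_big _ _ _ _ _ (fun j i => w i)) /=.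
  apply: ler_sum => i hi; apply: ler_sum => j hj; apply: hw.
  by apply: ltnW; apply: leq_trans hj.
have hd : d%:R = m%:R + k%:R :> R by rewrite -natrD /m subnK.
rewrite hW hd; lra.
Qed.

Lemma binA d k : (1 <= k)%N -> (k <= d)%N -> (d * 'C(d.-1, d - k) = k * 'C(d, k))%N.
Proof.
case: k => // m _ hk.
have -> : (d - m.+1 = d.-1 - m)%N by lia.
by rewrite bin_sub; [rewrite mul_bin_diag | lia].
Qed.

Lemma binB d k : (1 <= k)%N -> (k <= d - 1)%N ->
  (d.-1 * 'C(d.-2, d - k) = k.-1 * 'C(d.-1, d - k))%N.
Proof.
case: d => [|[|n]]; case: k => [|m] //=; try lia.
move=> _ hk.
case: m hk => [|m] hk.
  by rewrite bin_small ?muln0 ?mul0n //; lia.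
have -> : (n.+2 - m.+2 = n - m)%N by lia.
rewrite bin_sub; last lia.
have -> : (n - m = n.+1 - m.+1)%N by lia.
rewrite bin_sub; last lia.
by rewrite mul_bin_diag.
Qed.

Lemma sum_expand (R : realType) (I : finType) (P : pred I) (f g : I -> R) al be a b :
  \sum_(i | P i) (al * f i + be) * (a * g i - b) =
  al * a * \sum_(i | P i) (f i * g i) + be * a * \sum_(i | P i) g i
  - al * b * \sum_(i | P i) f i - be * b * \sum_(i | P i) 1.
Proof.
rewrite !mulr_sumr -!big_split /= -!sumrB; apply: eq_bigr => i _; ring.
Qed.

Theorem lemma6p3 (R : realType) (d k : nat) (eps : R) (w : 'I_d -> R)
  (heps : 0 < eps)
  (hw : forall i j : 'I_d, (i <= j)%N -> w j <= w i)
  (hk1 : (1 <= k)%N) (hkd : (k <= d - 1)%N)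
  (hmm : wmin k w < wmax k w)
  (v : 'I_d -> R) (hv : is_scored_vote w v) :
  forall j : 'I_d, expected_priv_view k eps w v j = v j.
Proof.
move=> j.
have hkd' : (k <= d)%N by lia.
have havg := @avg R d k w hw hkd'.
have hE : 1 < expR eps := pexpR_gt1 heps.
have hvW : \sum_i v i = Wsum w.
  case: hv => s hs; rewrite (eq_bigr (fun i => w (s i))) //.
  by rewrite /Wsum [RHS](reindex_inj (@perm_inj _ s)).
have hsv : forall S : {set 'I_d}, \sum_(i in S) v i = \sum_i v i * (i \in S)%:R.
  move=> S; rewrite big_mkcond; apply: eq_bigr => i _.
  by case: (i \in S); rewrite ?mulr1 ?mulr0.
have hN : \sum_(S : {set 'I_d} | #|S| == k) (1:R) = 'C(d, k)%:R.
  rewrite sum_cst mulr1 -[d in 'C(d, k)](card_ord d) -card_draws.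
  by congr (_%:R); apply: eq_card => S; rewrite !inE.
have h1 : forall i : 'I_d, \sum_(S : {set 'I_d} | #|S| == k) ((i \in S)%:R : R) = 'C(d.-1, d - k)%:R.
  by move=> i; apply: cnt1.
have hSv : \sum_(S : {set 'I_d} | #|S| == k) \sum_(i in S) v i = 'C(d.-1, d - k)%:R * Wsum w.
  under eq_bigr => S _ do rewrite hsv.
  rewrite exchange_big /= -hvW mulr_sumr; apply: eq_bigr => i _.
  by rewrite -mulr_sumr h1 mulrC.
have hSvj : \sum_(S : {set 'I_d} | #|S| == k) (\sum_(i in S) v i) * (j \in S)%:R
    = 'C(d.-1, d - k)%:R * v j + 'C(d.-2, d - k)%:R * (Wsum w - v j).
  have -> : Wsum w - v j = \sum_(i | i != j) v i by rewrite -hvW (bigD1 j) //= addrC addrK.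
  under eq_bigr => S _ do rewrite hsv mulr_suml.
  rewrite exchange_big /= (bigD1 j) //=; congr (_ + _).
    under eq_bigr => S _ do rewrite -mulrA -natrM mulnb andbb.
    by rewrite -mulr_sumr h1 mulrC.
  rewrite mulr_sumr; apply: eq_bigr => i hij.
  under eq_bigr => S _ do rewrite -mulrA.
  by rewrite -mulr_sumr cnt2 // mulrC.
have hA := @binA d k hk1 hkd'.
have hB := @binB d k hk1 hkd.
rewrite /expected_priv_view /add_prob /priv_view.
set E := expR eps. set Wm := wmin k w. set WM := wmax k w. set W := Wsum w.
set Ph := Phi k eps w. set a := a_coef k eps w. set b := b_coef k eps w.
have hD : 0 < WM - Wm by rewrite subr_gt0.
have hE1 : 0 < E - 1 by rewrite subr_gt0.
have hd0 : (0 < d)%N by lia.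
have hdR : 0 < d%:R :> R by rewrite ltr0n.
have hkR : 0 < k%:R :> R by rewrite ltr0n.
have hc0 : 0 < 'C(d, k)%:R :> R by rewrite ltr0n bin_gt0.
have hDp : 0 < k%:R / d%:R * (E - 1) * W - E * Wm + WM.
  have : Wm <= k%:R / d%:R * W.
    by rewrite mulrAC ler_pdivlMr // mulrC.
  nra.
have hPh : Ph = 'C(d, k)%:R * (k%:R / d%:R * (E - 1) * W - E * Wm + WM) / (WM - Wm) by [].
have hPh0 : Ph != 0.
  rewrite hPh; apply/lt0r_neq0; apply: divr_gt0 => //; exact: mulr_gt0.
set al := (E - 1) / ((WM - Wm) * Ph).
set be := (1 - Wm * (E - 1) / (WM - Wm)) / Ph.
have hlin : forall x, (x - Wm) / (WM - Wm) * ((E - 1) / Ph) + 1 / Ph = al * x + be.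
  move=> x; rewrite /al /be; field.
  by rewrite hPh0 /= lt0r_neq0.
under eq_bigr => S _ do rewrite hlin.
rewrite (@sum_expand R {set 'I_d} _ (fun S : {set 'I_d} => \sum_(i in S) v i) (fun S : {set 'I_d} => ((j \in S)%:R : R))).
rewrite hSvj h1 hSv hN.
have hd1 : (d.-1)%:R = d%:R - 1 :> R by rewrite -subn1 natrB.
have hk1' : (k.-1)%:R = k%:R - 1 :> R by rewrite -subn1 natrB.
have hdk : (d - k)%:R = d%:R - k%:R :> R by rewrite natrB.
have hA' := congr1 (fun n => n%:R : R) hA; rewrite /= !natrM in hA'.
have hB' := congr1 (fun n => n%:R : R) hB; rewrite /= !natrM hd1 hk1' in hB'.
move: hA' hB'.
rewrite /al /be /a /b /a_coef /b_coef hPh -/Wm -/WM -/W -/E hdk.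
move: ('C(d, k)%:R) ('C(d.-1, d - k)%:R) ('C(d.-2, d - k)%:R) hc0 => c0 c1 c2 hc0 hA' hB'.
have hd1R : d%:R - 1 != 0 :> R.
  rewrite -hd1 pnatr_eq0; lia.
have hdkR : d%:R - k%:R != 0 :> R.
  rewrite -hdk pnatr_eq0; lia.
have -> : c2 = (k%:R - 1) * c1 / (d%:R - 1) by rewrite -hB' mulrAC divff // mul1r.
have -> : c1 = k%:R * c0 / d%:R by rewrite -hA' mulrAC divff ?mul1r // lt0r_neq0.
have hDp0 := lt0r_neq0 hDp.
have hD0 := lt0r_neq0 hD.
have hE10 := lt0r_neq0 hE1.
have hd0R := lt0r_neq0 hdR.
have hk0R := lt0r_neq0 hkR.
have hc00 := lt0r_neq0 hc0.
have hX : k%:R * (E - 1) * W + - (E * Wm) * d%:R + WM * d%:R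
   = d%:R * (k%:R / d%:R * (E - 1) * W - E * Wm + WM) by field.
field.
by rewrite hE10 hdkR hd1R hD0 hd0R hc00 hk0R hX mulf_neq0.
Qed.
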